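(* Let $n\geq 3$, $q\geq 1$ with $\gcd(q,n-1)=1$, $k=-n+\frac{n-1}{q}$, and $\beta_0=q\delta-\theta$. Then there is an isomorphism of Coxeter systems $\sigma:(\widehat W,S)\to(\widehat W(k\Lambda_0),S(k\Lambda_0))$ with $\sigma(s_{\alpha_0})=s_{\beta_0}$ and $\sigma(s_{\alpha_i})=s_{\alpha_i}$ for $i=1,\dots,n-1$. In particular $\sigma(\widehat W_0(-\Lambda_0))=\widehat W_0(k\Lambda_0)$.
   Context: Affine $\widehat{sl}_n$ with simple roots $\alpha_0=\delta-\theta,\alpha_1,\dots,\alpha_{n-1}$ ($\theta$ the highest root of $sl_n$, $\delta$ the primitive positive imaginary root), invariant form $(\cdot|\cdot)$, real roots $\widehat\Delta^{re}$, $\alpha^\vee=2\alpha/(\alpha|\alpha)$, reflections $s_\alpha$; $\Lambda_0$ is the fundamental weight with $\Lambda_0(\alpha_j^\vee)=\delta_{0j}$, and $\widehat\rho$ satisfies $(\widehat\rho|\alpha_i^\vee)=1$ for all $i$. $\widehat W$ is the affine Weyl group with $S=\{s_{\alpha_0},\dots,s_{\alpha_{n-1}}\}$. For $\lambda$, $\widehat\Delta(\lambda)=\{\alpha\in\widehat\Delta^{re}:(\lambda+\widehat\rho|\alpha^\vee)\in\mathbb Z\}$ and $\widehat\Delta_0(\lambda)=\{\alpha\in\widehat\Delta^{re}:(\lambda+\widehat\rho|\alpha^\vee)=0\}$; $\widehat W(\lambda)$ (resp. $\widehat W_0(\lambda)$) is the group generated by reflections in $\widehat\Delta(\lambda)$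 (resp. $\widehat\Delta_0(\lambda)$), and $S(\lambda)=\{s_\alpha:\alpha\text{ simple in }\widehat\Delta^+(\lambda)\}$, so $(\widehat W(\lambda),S(\lambda))$ is a Coxeter system. Here the simple roots of $\widehat\Delta(k\Lambda_0)$ are $\beta_0,\alpha_1,\dots,\alpha_{n-1}$, $\widehat W_0(k\Lambda_0)=\{e,s_{\beta_0}\}$ and $\widehat W_0(-\Lambda_0)=\{e,s_{\alpha_0}\}$. *)

(* Defs.v *)
From HB Require Import structures.
From mathcomp Require Import all_boot all_order all_algebra.
Set Implicit Arguments. Unset Strict Implicit. Unset Printing Implicit Defensive.
Import Order.TTheory GRing.Theory Num.Theory.
Local Open Scope ring_scope.

(* A weight is a row vector of length n+2 over rat:
   coordinates 0..n-1 : coefficients on eps_0,...,eps_{n-1} (finite part, in gl_n coordinates),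
   coordinate n       : coefficient on Lambda_0,
   coordinate n+1     : coefficient on delta. *)
Definition V (n : nat) := 'rV[rat]_(n.+2).
Definition Mat (n : nat) := 'M[rat]_(n.+2).

Definition epsn (n i : nat) : V n := delta_mx 0 (inord i).
Definition L0 (n : nat) : V n := delta_mx 0 (inord n).
Definition dlt (n : nat) : V n := delta_mx 0 (inord n.+1).

(* normalized invariant form: (eps_i|eps_j)=delta_ij, (Lambda0|delta)=1,
   (Lambda0|Lambda0)=(delta|delta)=0, delta and Lambda0 orthogonal to the finite part *)
Definition form (n : nat) (u v : V n) : rat :=
  \sum_(i < n) u 0 (inord i) * v 0 (inord i)
  + u 0 (inord n) * v 0 (inord n.+1) + u 0 (inord n.+1) * v 0 (inord n).

Definition coroot (n : nat) (a : V n) : V n := (2 / form a a) *: a.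

Definition refl (n : nat) (a : V n) : Mat n :=
  lin1_mx (fun v : V n => v - form v (coroot a) *: a).

Definition theta (n : nat) : V n := epsn n 0 - epsn n n.-1.

Definition alpha (n : nat) (i : 'I_n) : V n :=
  if val i == 0%N then dlt n - theta n else epsn n i.-1 - epsn n i.

Definition real_root (n : nat) (v : V n) : Prop :=
  exists (i j : 'I_n) (m : int), i != j /\ v = epsn n i - epsn n j + m%:~R *: dlt n.

Definition pos_real_root (n : nat) (v : V n) : Prop :=
  exists (i j : 'I_n) (m : int), i != j /\ v = epsn n i - epsn n j + m%:~R *: dlt n
    /\ ((0 < m)%R \/ (m = 0 /\ (i < j)%N)).

(* rho-hat = rho + h^vee Lambda_0, with rho = sum_i ((n-1)/2 - i) eps_i and h^vee = n *)
Definition hrho (n : nat) : V n :=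
  \sum_(i < n) (((n%:R - 1) / 2 - i%:R) *: epsn n i) + n%:R *: L0 n.

Definition is_intQ (x : rat) : Prop := exists z : int, x = z%:~R.

Definition int_root (n : nat) (lam : V n) (a : V n) : Prop :=
  real_root a /\ is_intQ (form (lam + hrho n) (coroot a)).
Definition zero_root (n : nat) (lam : V n) (a : V n) : Prop :=
  real_root a /\ form (lam + hrho n) (coroot a) = 0.

Definition simple_int_root (n : nat) (lam : V n) (a : V n) : Prop :=
  int_root lam a /\ pos_real_root a /\
  ~ (exists b c : V n, int_root lam b /\ pos_real_root b /\
                       int_root lam c /\ pos_real_root c /\ a = b + c).

(* subgroup generated by a set of involutions (finite products of generators) *)
Inductive gen (n : nat) (G : Mat n -> Prop) : Mat n -> Prop :=
| gen1 : gen G 1%:M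
| genM (g x : Mat n) : G g -> gen G x -> gen G (g *m x).

Definition Shat (n : nat) : Mat n -> Prop := fun g => exists i : 'I_n, g = refl (alpha i).
Definition What (n : nat) : Mat n -> Prop := gen (@Shat n).
Definition Wlam (n : nat) (lam : V n) : Mat n -> Prop :=
  gen (fun g => exists a, int_root lam a /\ g = refl a).
Definition W0lam (n : nat) (lam : V n) : Mat n -> Prop :=
  gen (fun g => exists a, zero_root lam a /\ g = refl a).
Definition Slam (n : nat) (lam : V n) : Mat n -> Prop :=
  fun g => exists a, simple_int_root lam a /\ g = refl a.

(* Main.v *)
Require Import Defs.
From HB Require Import structures.
From mathcomp Require Import all_boot all_order all_algebra.
From mathcomp Require Import zify ring lra.
Unset Printing Implicit Defensive.
Require Import Defs.
Import Order.TTheory GRing.Theory Num.Theory.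
Local Open Scope ring_scope.

Section Basics.
Context {n : nat}.

Lemma inordE (a : nat) (t : 'I_(n.+2)) : (a < n.+2)%N ->
  (t == inord a) = (a == t).
Proof.
move=> ha; rewrite -(inj_eq val_inj) /= inordK //.
Qed.

Lemma epsE (a : nat) (t : 'I_(n.+2)) : (a < n.+2)%N ->
  (epsn n a) 0 t = (a == t)%:R.
Proof. by move=> ha; rewrite /epsn mxE eqxx /= inordE. Qed.

Lemma valin (a : nat) : (a < n.+2)%N -> nat_of_ord (inord a : 'I_(n.+2)) = a.
Proof. by move=> h; exact: inordK. Qed.

Definition rq (i j : nat) (x : rat) : V n := epsn n i - epsn n j + x *: dlt n.

Lemma rqE i j x (t : 'I_(n.+2)) : (i < n)%N -> (j < n)%N ->
  (rq i j x) 0 t = (i == t)%:R - (j == t)%:R + x * (n.+1 == t)%:R.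
Proof.
move=> hi hj; rewrite /rq /epsn /dlt !mxE eqxx /= !inordE //; try lia.
Qed.

Lemma sum_delta (f : nat -> rat) (i : nat) : (i < n)%N ->
  \sum_(t < n) f t * (i == t)%:R = f i.
Proof.
move=> hi; rewrite (bigD1 (Ordinal hi)) //= eqxx mulr1 big1 ?addr0 //.
move=> t ht; case: eqP => [e|]; last by rewrite mulr0.
by case/eqP: ht; apply: val_inj; rewrite /= e.
Qed.

Lemma sum_delta' (f : nat -> rat) (i : nat) : (i < n)%N ->
  \sum_(t < n) f t * (t == i :> nat)%:R = f i.
Proof.
move=> hi; rewrite (bigD1 (Ordinal hi)) //= eqxx mulr1 big1 ?addr0 //.
move=> t ht; case: eqP => [e|]; last by rewrite mulr0.
by case/eqP: ht; apply: val_inj; rewrite /= e.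
Qed.

Lemma form_rq (Y : V n) i j x : (i < n)%N -> (j < n)%N ->
  form Y (rq i j x) = Y 0 (inord i) - Y 0 (inord j) + Y 0 (inord n) * x.
Proof.
move=> hi hj; rewrite /form.
rewrite !rqE ?valin //; try lia.
rewrite (eq_bigr (fun t : 'I_n => Y 0 (inord t) * (i == t)%:R - Y 0 (inord t) * (j == t)%:R)); last first.
  move=> t _; rewrite rqE // valin; last by have := ltn_ord t; lia.
  have -> : (n.+1 == t) = false by have := ltn_ord t; lia.
  by rewrite mulr0 addr0 mulrBr.
rewrite sumrB (sum_delta (fun t => Y 0 (inord t))) // (sum_delta (fun t => Y 0 (inord t))) //.
have -> : (i == n) = false by lia.
have -> : (j == n) = false by lia.
have -> : (n.+1 == n) = false by lia.
have -> : (i == n.+1) = false by lia.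
have -> : (j == n.+1) = false by lia.
by rewrite eqxx /= !subrr !add0r mulr1 !mulr0 addr0.
Qed.

End Basics.
Arguments rq n i j x : clear implicits.

Lemma rearr4 (R : comPzRingType) (A B a1 b1 a2 b2 : R) :
  A + B + (a1 + b1) + (a2 + b2) = (A + a1 + a2) + (B + b1 + b2).
Proof. ring. Qed.

Section Form.
Context {n : nat}.
Implicit Types u v w : V n.

Lemma form_sym u v : form u v = form v u.
Proof.
rewrite /form (eq_bigr (fun i : 'I_n => v 0 (inord i) * u 0 (inord i))).
  by rewrite addrAC [X in _ + X + _]mulrC [X in _ + X]mulrC.
by move=> i _; rewrite mulrC.
Qed.

Lemma formDl u v w : form (u + v) w = form u w + form v w.
Proof.
rewrite /form (eq_bigr (fun i : 'I_n => u 0 (inord i) * w 0 (inord i) + v 0 (inord i) * w 0 (inord i))); last first.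
  by move=> i _; rewrite mxE mulrDl.
rewrite big_split !mxE !mulrDl.
exact: rearr4.
Qed.

Lemma formZl a u w : form (a *: u) w = a * form u w.
Proof.
rewrite /form (eq_bigr (fun i : 'I_n => a * (u 0 (inord i) * w 0 (inord i)))); last first.
  by move=> i _; rewrite mxE mulrA.
rewrite -mulr_sumr !mxE -!mulrA -!mulrDr.
done.
Qed.

Lemma formNl u w : form (- u) w = - form u w.
Proof. by rewrite -scaleN1r formZl mulN1r. Qed.

Lemma formBl u v w : form (u - v) w = form u w - form v w.
Proof. by rewrite formDl formNl. Qed.

Lemma formDr u v w : form w (u + v) = form w u + form w v.
Proof. by rewrite form_sym formDl !(form_sym w). Qed.
Lemma formZr a u w : form w (a *: u) = a * form w u.
Proof. by rewrite form_sym formZl form_sym. Qed.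
Lemma formNr u w : form w (- u) = - form w u.
Proof. by rewrite form_sym formNl form_sym. Qed.
Lemma formBr u v w : form w (u - v) = form w u - form w v.
Proof. by rewrite formDr formNr. Qed.

End Form.

Definition reflf (n : nat) (a : V n) (v : V n) : V n := v - form v (coroot a) *: a.
Arguments reflf {n}.

Lemma reflf_lin (n : nat) (a : V n) : linear (reflf a).
Proof.
move=> t u v; rewrite /reflf formDl formZl scalerDl scalerBr -!scalerA.
rewrite addrACA; congr (_ + _); by rewrite opprD.
Qed.

HB.instance Definition _ (n : nat) (a : V n) :=
  GRing.isLinear.Build rat (V n) (V n) *:%R (reflf a) (reflf_lin n a).

Lemma refl_act (n : nat) (a u : V n) : u *m refl a = reflf a u.
Proof. by rewrite /refl (mul_rV_lin1 (reflf a)). Qed.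

Lemma mx_ext (m : nat) (A B : 'M[rat]_m) :
  (forall u : 'rV[rat]_m, u *m A = u *m B) -> A = B.
Proof. by move=> h; apply/row_matrixP => i; rewrite !rowE h. Qed.

Section Refl.
Context {n : nat}.
Implicit Types u v a c : V n.

Lemma coroot2 a : form a a = 2 -> coroot a = a.
Proof. by move=> h; rewrite /coroot h divff ?scale1r. Qed.

Lemma reflfE a u : form a a = 2 -> reflf a u = u - form u a *: a.
Proof. by move=> h; rewrite /reflf coroot2. Qed.

Lemma reflf_self c : form c c = 2 -> reflf c c = - c.
Proof.
move=> h; rewrite reflfE // h scaler_nat.
by rewrite mulr2n opprD addrA subrr add0r.
Qed.

Lemma reflfK c u : form c c = 2 -> reflf c (reflf c u) = u.
Proof.
move=> h; rewrite {1}(reflfE c u h) linearB linearZ /= reflf_self //.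
by rewrite reflfE // scalerN opprK subrK.
Qed.

Lemma reflf_form c u v : form c c = 2 -> form (reflf c u) v = form u (reflf c v).
Proof.
move=> h; rewrite !reflfE // formBl formBr formZl formZr.
by rewrite (form_sym c v) mulrC.
Qed.

Lemma reflf_norm c a : form c c = 2 -> form a a = 2 -> form (reflf c a) (reflf c a) = 2.
Proof. by move=> hc ha; rewrite reflf_form // reflfK. Qed.

Lemma refl_conj a c : form a a = 2 -> form c c = 2 ->
  refl c *m refl a *m refl c = refl (reflf c a).
Proof.
move=> ha hc; apply: mx_ext => u.
rewrite !mulmxA !refl_act.
rewrite (reflfE (reflf c a)); last exact: reflf_norm.
rewrite (reflfE a) // linearB linearZ /= reflfK //.
by rewrite reflf_form // reflfK.
Qed.

End Refl.

Lemma gen_mul (n : nat) (G : Mat n -> Prop) a b : gen G a -> gen G b -> gen G (a *m b).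
Proof.
elim=> [|g x Gg _ IH] hb; first by rewrite mul1mx.
by rewrite -mulmxA; apply: genM => //; apply: IH.
Qed.

Lemma gen_in (n : nat) (G : Mat n -> Prop) g : G g -> gen G g.
Proof. by move=> h; rewrite -[g]mulmx1; apply: genM => //; apply: gen1. Qed.

Definition dd (n : nat) (c : rat) : 'rV[rat]_(n.+2) :=
  \row_(t < n.+2) (if (t == n :> nat) then c^-1 else if (t == n.+1 :> nat) then c else 1).
Definition Tc (n : nat) (c : rat) (v : V n) : V n := v *m diag_mx (dd n c).
Arguments Tc {n}.

Section Tc.
Context {n : nat}.
Implicit Types u v : V n.

Lemma TcE c v t : (Tc c v) 0 t = v 0 t * dd n c 0 t.
Proof. by rewrite /Tc mul_mx_diag mxE. Qed.

Lemma ddE_lt c (t : 'I_(n.+2)) : (t < n)%N -> dd n c 0 t = 1.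
Proof.
move=> h; rewrite mxE.
have -> : (t == n :> nat) = false by lia.
by have -> : (t == n.+1 :> nat) = false by lia.
Qed.

Lemma ddE_n c : dd n c 0 (inord n) = c^-1.
Proof. by rewrite mxE inordK // eqxx. Qed.

Lemma ddE_n1 c : dd n c 0 (inord n.+1) = c.
Proof.
rewrite mxE inordK //.
have -> : (n.+1 == n) = false by lia.
by rewrite eqxx.
Qed.

Lemma Tc_eps c a : (a < n)%N -> Tc c (epsn n a) = epsn n a.
Proof.
move=> ha; apply/rowP => t; rewrite TcE epsE; last by lia.
case: eqP => [e|]; last by rewrite mul0r.
by rewrite ddE_lt ?mulr1 // -e.
Qed.

Lemma Tc_dlt c : Tc c (dlt n) = c *: dlt n.
Proof.
apply/rowP => t; rewrite TcE [in RHS]mxE; change (dlt n) with (epsn n n.+1).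
rewrite !epsE //.
case: eqP => [e|]; last by rewrite mul0r mulr0.
have -> : t = inord n.+1 by apply: val_inj; rewrite /= inordK.
by rewrite ddE_n1 mul1r mulr1.
Qed.

Lemma TcD c u v : Tc c (u + v) = Tc c u + Tc c v.
Proof. by rewrite /Tc mulmxDl. Qed.
Lemma TcB c u v : Tc c (u - v) = Tc c u - Tc c v.
Proof. by rewrite /Tc mulmxBl. Qed.
Lemma TcZ c a v : Tc c (a *: v) = a *: Tc c v.
Proof. by rewrite /Tc scalemxAl. Qed.

Lemma Tc_rq c i j x : (i < n)%N -> (j < n)%N -> Tc c (rq n i j x) = rq n i j (x * c).
Proof.
move=> hi hj; rewrite /rq TcD TcB TcZ (Tc_eps c i) // (Tc_eps c j) // Tc_dlt scalerA.
by rewrite mulrC.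
Qed.

Lemma TcK c v : c != 0 -> Tc c (Tc c^-1 v) = v.
Proof.
move=> hc; apply/rowP => t; rewrite !TcE -mulrA.
case: (ltnP t n) => h; first by rewrite !ddE_lt // !mulr1.
case: (ltnP t n.+1) => h2.
  have -> : t = inord n by apply: val_inj; rewrite /= inordK //; lia.
  by rewrite !ddE_n invrK mulfV ?mulr1.
have -> : t = inord n.+1.
  by apply: val_inj; rewrite /= inordK //; have := ltn_ord t; lia.
by rewrite !ddE_n1 mulVf ?mulr1.
Qed.

Lemma TcK' c v : c != 0 -> Tc c^-1 (Tc c v) = v.
Proof.
move=> hc; rewrite -{2}(invrK c); apply: TcK; by rewrite invr_eq0.
Qed.

Lemma Tc_iso c u v : c != 0 -> form (Tc c u) (Tc c v) = form u v.
Proof.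
move=> hc; rewrite /form !TcE !ddE_n !ddE_n1.
congr (_ + _ + _).
- apply: eq_bigr => t _; rewrite !TcE ddE_lt ?mulr1 //.
  by rewrite inordK //; have := ltn_ord t; lia.
- by rewrite mulrACA mulVf // mulr1.
- by rewrite mulrACA mulfV // mulr1.
Qed.

End Tc.

Definition sigmaq (n : nat) (q : rat) (M : Mat n) : Mat n :=
  diag_mx (dd n q^-1) *m M *m diag_mx (dd n q).

Arguments sigmaq {n}.

Section Sigma.
Context {n : nat}.
Variable q : rat.
Hypothesis hq : q != 0.

Lemma sigma_act (M : Mat n) (u : V n) : u *m sigmaq q M = Tc q (Tc q^-1 u *m M).
Proof. by rewrite /sigmaq /Tc !mulmxA. Qed.

Lemma sigmaM (A B : Mat n) : sigmaq q (A *m B) = sigmaq q A *m sigmaq q B.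
Proof.
by apply: mx_ext => u; rewrite mulmxA !sigma_act TcK' // mulmxA.
Qed.

Lemma sigma1 : sigmaq q (1%:M : Mat n) = 1%:M.
Proof. by apply: mx_ext => u; rewrite sigma_act mulmx1 TcK // mulmx1. Qed.

Lemma sigma_inj (A B : Mat n) : sigmaq q A = sigmaq q B -> A = B.
Proof.
move=> h; apply: mx_ext => u.
have e : forall M : Mat n, u *m M = Tc q^-1 (Tc q u *m sigmaq q M).
  by move=> M; rewrite sigma_act TcK' // TcK' .
by rewrite (e A) (e B) h.
Qed.

Lemma Tc_coroot (a : V n) : coroot (Tc q a) = Tc q (coroot a).
Proof. by rewrite /coroot Tc_iso // TcZ. Qed.

Lemma sigma_refl (a : V n) : sigmaq q (refl a) = refl (Tc q a).
Proof.
apply: mx_ext => u; rewrite sigma_act !refl_act /reflf TcB TcZ TcK //.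
rewrite Tc_coroot; congr (_ - _ *: _).
by rewrite -[in RHS](TcK q u hq) Tc_iso.
Qed.

End Sigma.

Section Roots.
Context {n : nat}.

Lemma rq_inord i j x t : (i < n)%N -> (j < n)%N -> (t < n)%N ->
  (rq n i j x) 0 (inord t) = (i == t)%:R - (j == t)%:R.
Proof.
move=> hi hj ht; rewrite rqE // valin; last by lia.
have -> : (n.+1 == t) = false by lia.
by rewrite mulr0 addr0.
Qed.

Lemma rq_n i j x : (i < n)%N -> (j < n)%N -> (rq n i j x) 0 (inord n) = 0.
Proof.
move=> hi hj; rewrite rqE // valin //.
have -> : (i == n) = false by lia.
have -> : (j == n) = false by lia.
have -> : (n.+1 == n) = false by lia.
by rewrite subrr add0r mulr0.
Qed.

Lemma form_rqrq a b y i j x : (a < n)%N -> (b < n)%N -> (i < n)%N -> (j < n)%N ->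
  form (rq n a b y) (rq n i j x) =
  ((a == i)%:R - (b == i)%:R) - ((a == j)%:R - (b == j)%:R).
Proof.
move=> ha hb hi hj; by rewrite form_rq // (rq_inord a b y i) // (rq_inord a b y j) // rq_n // mul0r addr0.
Qed.

Lemma rq_norm i j x : (i < n)%N -> (j < n)%N -> i != j -> form (rq n i j x) (rq n i j x) = 2.
Proof.
move=> hi hj hij; rewrite form_rqrq // !eqxx.
have -> : (i == j) = false by lia.
have -> : (j == i) = false by lia.
rewrite /=; lra.
Qed.

Lemma L0_lt t : (t < n)%N -> (L0 n) 0 (inord t) = 0.
Proof.
move=> ht; change (L0 n) with (epsn n n); rewrite epsE // valin; last by lia.
by have -> : (n == t) = false by lia.
Qed.

Lemma L0_n : (L0 n) 0 (inord n) = 1.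
Proof. by change (L0 n) with (epsn n n); rewrite epsE // valin // eqxx. Qed.

Lemma hrho_coord (t : 'I_(n.+2)) :
  (hrho n) 0 t = \sum_(i < n) ((n%:R - 1) / 2 - i%:R) * (i == t :> nat)%:R
                 + n%:R * (n == t :> nat)%:R.
Proof.
rewrite /hrho mxE summxE; congr (_ + _).
  apply: eq_bigr => i _; rewrite mxE epsE //; have := ltn_ord i; lia.
by change (L0 n) with (epsn n n); rewrite mxE epsE.
Qed.

Lemma hrho_lt t : (t < n)%N -> (hrho n) 0 (inord t) = (n%:R - 1) / 2 - t%:R.
Proof.
move=> ht; rewrite hrho_coord valin; last by lia.
rewrite (sum_delta' (fun i => (n%:R - 1) / 2 - i%:R)) //.
have -> : (n == t) = false by lia.
by rewrite mulr0 addr0.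
Qed.

Lemma hrho_n : (hrho n) 0 (inord n) = n%:R.
Proof.
rewrite hrho_coord valin // eqxx mulr1 big1 ?add0r // => i _.
have -> : (i == n :> nat) = false by have := ltn_ord i; lia.
by rewrite mulr0.
Qed.

Lemma form_lam c i j x : (i < n)%N -> (j < n)%N ->
  form (c *: L0 n + hrho n) (rq n i j x) = (j%:R - i%:R) + (c + n%:R) * x.
Proof.
have E : forall t, (c *: L0 n + hrho n) 0 t = c * (L0 n) 0 t + (hrho n) 0 t.
  by move=> t; rewrite [LHS]mxE; congr (_ + _); rewrite mxE.
move=> hi hj; rewrite form_rq // !E (L0_lt i) // (L0_lt j) // L0_n (hrho_lt i) // (hrho_lt j) // hrho_n.
rewrite !mulr0 !add0r mulr1; lra.
Qed.

Lemma form_hrho i j x : (i < n)%N -> (j < n)%N ->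
  form (hrho n) (rq n i j x) = (j%:R - i%:R) + n%:R * x.
Proof.
move=> hi hj; rewrite form_rq // (hrho_lt i) // (hrho_lt j) // hrho_n; lra.
Qed.

End Roots.

Lemma zrearr (Z : zmodType) (a b c s t : Z) : (a - b + s) + (b - c + t) = (a - c) + (s + t).
Proof. by rewrite addrACA [a - b + _]addrA subrK. Qed.

Section Gen.
Context {n : nat}.
Hypothesis hn : (3 <= n)%N.

Lemma rq_add i j k x y : rq n i j x + rq n j k y = rq n i k (x + y).
Proof. by rewrite /rq scalerDl zrearr. Qed.

Lemma rq_opp i j x : - rq n i j x = rq n j i (- x).
Proof. by rewrite /rq opprD opprB scaleNr. Qed.

Lemma refl_opp (a : V n) : refl (- a) = refl a.
Proof.
apply: mx_ext => u; rewrite !refl_act /reflf /coroot formNl formNr opprK.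
by rewrite !scalerN formNr scaleNr opprK.
Qed.

Lemma refl_rq_sym i j x : refl (rq n i j x) = refl (rq n j i (- x)).
Proof. by rewrite -rq_opp refl_opp. Qed.

Lemma alpha0E (i : 'I_n) : val i = 0%N -> alpha i = rq n n.-1 0 1.
Proof. by move=> h; rewrite /alpha h eqxx /rq /theta scale1r opprB addrC. Qed.

Lemma alphaSE (i : 'I_n) : (0 < val i)%N -> alpha i = rq n (val i).-1 (val i) 0.
Proof.
move=> h; rewrite /alpha; have -> : (val i == 0%N) = false by lia.
by rewrite /rq scale0r addr0.
Qed.

Definition Wr (a : V n) := @What n (refl a).

Lemma CR i j k x y : (i < n)%N -> (j < n)%N -> (k < n)%N ->
  i != j -> j != k -> i != k ->
  Wr (rq n i j x) -> Wr (rq n j k y) -> Wr (rq n i k (x + y)).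
Proof.
move=> hi hj hk hij hjk hik Wc Wa.
have hc : form (rq n i j x) (rq n i j x) = 2 by apply: rq_norm.
have ha : form (rq n j k y) (rq n j k y) = 2 by apply: rq_norm.
have e : reflf (rq n i j x) (rq n j k y) = rq n i k (x + y).
  rewrite reflfE // form_rqrq //.
  have -> : (j == i) = false by lia.
  have -> : (k == i) = false by lia.
  have -> : (k == j) = false by lia.
  rewrite eqxx /= !subrr sub0r subr0 scaleN1r opprK addrC; exact: rq_add.
rewrite /Wr -e -refl_conj //.
by apply: gen_mul => //; apply: gen_mul.
Qed.

Lemma Wr_alpha (i : 'I_n) : Wr (alpha i).
Proof. by apply: gen_in; exists i. Qed.

Lemma Q0 j : (j < n)%N -> forall i, (i < j)%N -> Wr (rq n i j 0).
Proof.
elim: j => [|j IH] hj i hij; first by [].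
have hj1 : (0 < (Ordinal hj : 'I_n))%N by [].
case: (eqVneq i j) => [->|ne].
  by have := Wr_alpha (Ordinal hj); rewrite alphaSE.
rewrite -[0 : rat]addr0; apply: (CR _ j) => //; try lia.
  by apply: IH => //; lia.
by have := Wr_alpha (Ordinal hj); rewrite alphaSE.
Qed.

Lemma Q0' i j : (i < n)%N -> (j < n)%N -> i != j -> Wr (rq n i j 0).
Proof.
move=> hi hj hij; case: (ltnP i j) => h; first exact: Q0.
rewrite /Wr refl_rq_sym oppr0; apply: Q0 => //; lia.
Qed.

Lemma Wg : Wr (rq n n.-1 0 1).
Proof.
have h0 : (0 < n)%N by lia.
by have := Wr_alpha (Ordinal h0); rewrite alpha0E.
Qed.

Lemma La j : (j < n)%N -> j != 0%N -> j != n.-1 -> Wr (rq n n.-1 j 1).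
Proof.
move=> hj h0 hN; rewrite -[1 : rat]addr0; apply: (CR _ 0%N); try lia.
  exact: Wg.
by apply: Q0'; lia.
Qed.

Lemma Lb i : (i < n)%N -> i != 0%N -> i != n.-1 -> Wr (rq n i 0 1).
Proof.
move=> hi h0 hN; rewrite -[1 : rat]add0r; apply: (CR _ n.-1); try lia.
  by apply: Q0'; lia.
exact: Wg.
Qed.

Lemma Lc j : (j < n)%N -> j != 0%N -> j != n.-1 -> Wr (rq n 0 j 1).
Proof.
move=> hj h0 hN; rewrite -[1 : rat]add0r; apply: (CR _ n.-1); try lia.
  by apply: Q0'; lia.
exact: La.
Qed.

Lemma Q1 i j : (i < n)%N -> (j < n)%N -> i != j -> Wr (rq n i j 1).
Proof.
move=> hi hj hij.
case: (eqVneq i n.-1) => [ei|hiN].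
  rewrite ei; case: (eqVneq j 0%N) => [ej|hj0]; first by rewrite ej; exact: Wg.
  by apply: La; lia.
case: (eqVneq j 0%N) => [ej|hj0].
  by rewrite ej; apply: Lb; lia.
case: (eqVneq i 0%N) => [ei|hi0].
  rewrite ei; case: (eqVneq j n.-1) => [ej|hjN]; last by apply: Lc; lia.
  rewrite ej -[1 : rat]addr0; apply: (CR _ 1%N); try lia.
    by apply: Lc; lia.
  by apply: Q0'; lia.
rewrite -[1 : rat]addr0; apply: (CR _ 0%N); try lia.
  by apply: Lb; lia.
by apply: Q0'; lia.
Qed.

Lemma pick3 i j : exists l, [/\ (l < n)%N, l != i & l != j].
Proof.
case: (eqVneq i 0%N) => hi; case: (eqVneq j 0%N) => hj.
- by exists 1%N; split; lia.
- case: (eqVneq j 1%N) => hj1; first by exists 2%N; split; lia.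
  by exists 1%N; split; lia.
- case: (eqVneq i 1%N) => hi1; first by exists 2%N; split; lia.
  by exists 1%N; split; lia.
- by exists 0%N; split; lia.
Qed.

Lemma Qnat (k : nat) i j : (i < n)%N -> (j < n)%N -> i != j -> Wr (rq n i j k%:R).
Proof.
elim: k i j => [|k IH] i j hi hj hij; first exact: Q0'.
have [l [hl hli hlj]] := pick3 i j.
rewrite -addn1 natrD addrC; apply: (CR _ l) => //; try lia.
  by apply: Q1; lia.
by apply: IH; lia.
Qed.

Lemma Qall (m : int) i j : (i < n)%N -> (j < n)%N -> i != j -> Wr (rq n i j m%:~R).
Proof.
move=> hi hj hij; case: m => k; first exact: Qnat.
rewrite /Wr refl_rq_sym NegzE intrN opprK; apply: Qnat => //; lia.
Qed.

End Gen.

Lemma is_int_nat (m : nat) : is_intQ (m%:R).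
Proof. by exists m%:Z. Qed.
Lemma is_int_int (m : int) : is_intQ (m%:~R).
Proof. by exists m. Qed.
Lemma is_intD x y : is_intQ x -> is_intQ y -> is_intQ (x + y).
Proof. by move=> [a ->] [b ->]; exists (a + b); rewrite intrD. Qed.
Lemma is_intB x y : is_intQ x -> is_intQ y -> is_intQ (x - y).
Proof. by move=> [a ->] [b ->]; exists (a - b); rewrite intrB. Qed.
Lemma is_intM x y : is_intQ x -> is_intQ y -> is_intQ (x * y).
Proof. by move=> [a ->] [b ->]; exists (a * b); rewrite intrM. Qed.

Definition posr (n : nat) (i j : nat) (m : int) :=
  [/\ (i < n)%N, (j < n)%N, i != j & (0 < m) || ((m == 0) && (i < j)%N)].

Lemma posr_pos n i j m : posr n i j m -> pos_real_root (rq n i j m%:~R).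
Proof.
case=> hi hj hij hp; exists (Ordinal hi), (Ordinal hj), m; split => //.
split => //; case/orP: hp => [h|/andP [/eqP -> h]]; [by left | by right].
Qed.

Section Comb.
Context {n : nat}.
Hypothesis hn : (3 <= n)%N.

Lemma rq_addz i k j (a b : int) : rq n i k a%:~R + rq n k j b%:~R = rq n i j (a + b)%:~R.
Proof. by rewrite rq_add intrD. Qed.

Lemma posr0 i j : (i < n)%N -> (j < n)%N -> (i < j)%N -> posr n i j 0.
Proof.
move=> hi hj hij; split => //; try lia; by rewrite ?eqxx hij ?orbT.
Qed.

Lemma posrp i j m : (i < n)%N -> (j < n)%N -> i != j -> 0 < m -> posr n i j m.
Proof. by move=> hi hj hij hm; split => //; rewrite hm. Qed.

Lemma Comb i j m : posr n i j m ->
  (exists t : 'I_n, rq n i j m%:~R = alpha t) \/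
  (exists k a b, posr n i k a /\ posr n k j b /\ m = a + b).
Proof.
case=> hi hj hij hp.
case/orP: hp => [hm|/andP [/eqP hm0 hij']].
- case: (ltnP 0 j) => hj0.
  + case: (eqVneq i 0%N) => hi0.
    * right; exists (if j == 1%N then 2%N else 1%N), 0, m; refine (conj _ (conj _ _)).
      - by case: (eqVneq j 1%N) => h; apply: posr0; lia.
      - by case: (eqVneq j 1%N) => h; apply: posrp => //; lia.
      - by rewrite add0r.
    * right; exists 0%N, m, 0; refine (conj _ (conj _ _)).
      - by apply: posrp => //; lia.
      - by apply: posr0; lia.
      - by rewrite addr0.
  + have ej : j = 0%N by lia.
    case: (ltnP i n.-1) => hiN.
    * right; exists n.-1, 0, m; refine (conj _ (conj _ _)).
      - by apply: posr0; lia.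
      - by apply: posrp => //; lia.
      - by rewrite add0r.
    * have ei : i = n.-1 by lia.
      case: (eqVneq m 1) => hm1.
      - left; have h0 : (0 < n)%N by lia.
        by exists (Ordinal h0); rewrite alpha0E // ei ej hm1.
      - right; exists 1%N, 1, (m - 1); refine (conj _ (conj _ _)).
        + by apply: posrp => //; lia.
        + by apply: posrp => //; lia.
        + by rewrite addrC subrK.
- case: (eqVneq j i.+1) => hji.
  + left; have h0 : (0 < (Ordinal hj : 'I_n))%N by rewrite /=; lia.
    by exists (Ordinal hj); rewrite alphaSE //= hji /= hm0.
  + right; exists i.+1, 0, 0; refine (conj _ (conj _ _)).
    * by apply: posr0; lia.
    * by apply: posr0; lia.
    * by rewrite hm0.
Qed.

End Comb.

Section Main.
Context {n : nat} (q : nat).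
Hypotheses (hn : (3 <= n)%N) (hq : (1 <= q)%N) (hcop : coprime q n.-1).

Let Q : rat := q%:R.
Lemma hQ : Q != 0.
Proof. by rewrite /Q pnatr_eq0; lia. Qed.

Let lamv : V n := (- n%:R + (n%:R - 1) / q%:R) *: L0 n.

Lemma FL i j x : (i < n)%N -> (j < n)%N ->
  form (lamv + hrho n) (rq n i j x) = (j%:R - i%:R) + ((n%:R - 1) / Q) * x.
Proof.
move=> hi hj; rewrite /lamv form_lam //; congr (_ + _ * _).
by rewrite addrC addNKr.
Qed.

Lemma FM i j x : (i < n)%N -> (j < n)%N ->
  form (- L0 n + hrho n) (rq n i j x) = (j%:R - i%:R) + (n%:R - 1) * x.
Proof.
move=> hi hj; rewrite -scaleN1r form_lam //; congr (_ + _ * _).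
by rewrite addrC.
Qed.

Lemma nm1 : ((n.-1)%:R : rat) = n%:R - 1.
Proof. by rewrite -subn1 natrB //; lia. Qed.

Lemma divM i j (M : int) : is_intQ ((j%:R - i%:R) + ((n%:R - 1) / Q) * M%:~R) ->
  (q%:Z %| M)%Z.
Proof.
move=> [z hz].
have e : ((z - (j%:Z - i%:Z)) * q%:Z = (n.-1)%:Z * M)%R.
  apply: (@intr_inj rat); rewrite !intrM intrB -hz intrB.
  rewrite -[((n.-1)%:Z)%:~R]/((n.-1)%:R) nm1 -[(q%:Z)%:~R]/Q -[(j%:Z)%:~R]/(j%:R) -[(i%:Z)%:~R]/(i%:R).
  by field; exact: hQ.
have : (q%:Z %| (n.-1)%:Z * M)%Z by rewrite -e dvdz_mull // dvdzz.
by rewrite !dvdzE abszM !absz_nat Gauss_dvdr.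
Qed.

Lemma TQ_rq i j (m : int) : (i < n)%N -> (j < n)%N ->
  Tc Q (rq n i j m%:~R) = rq n i j (m * q%:Z)%:~R.
Proof. by move=> hi hj; rewrite Tc_rq // intrM. Qed.

Lemma real_rq a : real_root a -> exists i j (m : int),
  [/\ (i < n)%N, (j < n)%N, i != j & a = rq n i j m%:~R].
Proof.
move=> [i [j [m [hij ->]]]]; exists i, j, m; split => //.
Qed.

Lemma rq_real i j (m : int) : (i < n)%N -> (j < n)%N -> i != j -> real_root (rq n i j m%:~R).
Proof.
by move=> hi hj hij; exists (Ordinal hi), (Ordinal hj), m.
Qed.

Lemma int_T i j (m : int) : (i < n)%N -> (j < n)%N -> i != j ->
  int_root lamv (Tc Q (rq n i j m%:~R)).
Proof.
move=> hi hj hij; rewrite TQ_rq //; split; first exact: rq_real.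
rewrite coroot2; last by apply: rq_norm.
rewrite FL // intrM.
rewrite (_ : (n%:R - 1) / Q * (m%:~R * (q%:Z)%:~R) = (n%:R - 1) * m%:~R); last first.
  by rewrite -[(q%:Z)%:~R]/Q; field; exact: hQ.
apply: is_intD; first by apply: is_intB; apply: is_int_nat.
by apply: is_intM; [apply: is_intB; [apply: is_int_nat| exists 1] | apply: is_int_int].
Qed.

Lemma int_inv b : int_root lamv b -> exists i j (m : int),
  [/\ (i < n)%N, (j < n)%N, i != j & b = Tc Q (rq n i j m%:~R)].
Proof.
move=> [/real_rq [i [j [M [hi hj hij ->]]]]].
rewrite coroot2; last by apply: rq_norm.
rewrite FL // => /divM hd.
exists i, j, (M %/ q)%Z; split => //.
by rewrite TQ_rq // divzK.
Qed.

Definition Hf (v : V n) : rat := form (hrho n) (Tc Q^-1 v).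

Lemma HfD u v : Hf (u + v) = Hf u + Hf v.
Proof. by rewrite /Hf TcD formDr. Qed.

Lemma Hf_T i j (m : int) : (i < n)%N -> (j < n)%N ->
  Hf (Tc Q (rq n i j m%:~R)) = (j%:R - i%:R) + n%:R * m%:~R.
Proof. by move=> hi hj; rewrite /Hf TcK' ?form_hrho //; exact: hQ. Qed.

Lemma Hf_pos c : int_root lamv c -> pos_real_root c -> 1 <= Hf c.
Proof.
move=> hc [i [j [M [hij [ec hp]]]]].
have hi := ltn_ord i; have hj := ltn_ord j.
have hd : (q%:Z %| M)%Z.
  move: hc => [_]; rewrite ec coroot2; last by apply: rq_norm.
  by rewrite FL // => /divM.
set m := (M %/ q)%Z.
have eM : M = m * q%:Z by rewrite divzK.
have -> : c = Tc Q (rq n i j m%:~R) by rewrite TQ_rq // -eM ec.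
rewrite Hf_T //.
have h1 : (i%:R + 1 <= n%:R :> rat) by rewrite natr1 ler_nat.
have h2 : (0 <= j%:R :> rat) by rewrite ler0n.
case: hp => [hM|[hM0 hlt]].
- have hm : (1 <= m) by nia.
  have hm' : (1 <= m%:~R :> rat) by rewrite -[1]/(1%:~R) ler_int.
  have h3 : n%:R * 1 <= n%:R * m%:~R :> rat by apply: ler_wpM2l; rewrite ?ler0n.
  rewrite mulr1 in h3; lra.
- have hm : m = 0 by nia.
  rewrite hm mulr0 addr0.
  have : (i%:R + 1 <= j%:R :> rat) by rewrite natr1 ler_nat.
  lra.
Qed.

Lemma posr_T i j (m : int) : posr n i j m -> posr n i j (m * q%:Z).
Proof.
case=> hi hj hij hp; split => //.
case/orP: hp => [hm|/andP [/eqP -> hlt]]; last by rewrite mul0r eqxx hlt orbT.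
by apply/orP; left; nia.
Qed.

Lemma pos_int_inv b : int_root lamv b -> pos_real_root b ->
  exists i j (m : int), posr n i j m /\ b = Tc Q (rq n i j m%:~R).
Proof.
move=> hb [i [j [M [hij [eb hp]]]]].
have hi := ltn_ord i; have hj := ltn_ord j.
have hd : (q%:Z %| M)%Z.
  move: hb => [_]; rewrite eb coroot2; last by apply: rq_norm.
  by rewrite FL // => /divM.
set m := (M %/ q)%Z.
have eM : M = m * q%:Z by rewrite divzK.
exists i, j, m; split; last by rewrite TQ_rq // -eM eb.
split => //; case: hp => [hM|[hM0 hlt]]; apply/orP.
  by left; nia.
by right; rewrite hlt andbT; apply/eqP; nia.
Qed.

Lemma alpha_data (t : 'I_n) : exists i j (m : int),
  [/\ posr n i j m, alpha t = rq n i j m%:~R & (j%:R - i%:R) + n%:R * m%:~R = 1 :> rat].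
Proof.
have htn := ltn_ord t.
case: (posnP t) => ht.
- exists n.-1, 0%N, 1; split.
  + by apply: posrp => //; lia.
  + by rewrite alpha0E.
  + by rewrite nm1 mulr1; lra.
- exists t.-1, (nat_of_ord t), 0; split.
  + by apply: posr0 => //; lia.
  + by rewrite alphaSE.
  + rewrite mulr0 addr0 -subn1 natrB //; lra.
Qed.

Lemma S1 (t : 'I_n) : simple_int_root lamv (Tc Q (alpha t)).
Proof.
have [i [j [m [[hi hj hij hp] ea ev]]]] := alpha_data t.
have pr : posr n i j m by [].
rewrite ea; split; first exact: int_T.
split; first by rewrite TQ_rq //; apply: posr_pos; apply: posr_T.
move=> [b [c [ib [pb [ic [pc e]]]]]].
have := Hf_pos _ ib pb; have := Hf_pos _ ic pc.
have : Hf (Tc Q (rq n i j m%:~R)) = 1 by rewrite Hf_T.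
rewrite e HfD; lra.
Qed.

Lemma S2 b : simple_int_root lamv b -> exists t : 'I_n, b = Tc Q (alpha t).
Proof.
move=> [ib [pb nd]].
have [i [j [m [pr eb]]]] := pos_int_inv _ ib pb.
case: (Comb hn _ _ _ pr) => [[t et]|[k [a [c [p1 [p2 em]]]]]].
  by exists t; rewrite eb et.
exfalso; apply: nd.
case: p1 => [hi hk hik hp1]; case: p2 => [hk' hj hkj hp2].
exists (Tc Q (rq n i k a%:~R)), (Tc Q (rq n k j c%:~R)).
split; first exact: int_T.
split; first by rewrite TQ_rq //; apply: posr_pos; apply: posr_T.
split; first exact: int_T.
split; first by rewrite TQ_rq //; apply: posr_pos; apply: posr_T.
by rewrite eb -TcD rq_addz em.
Qed.

Lemma zero_T a : zero_root (- L0 n) a -> zero_root lamv (Tc Q a).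
Proof.
move=> [/real_rq [i [j [m [hi hj hij ea]]]]]; rewrite ea coroot2; last by apply: rq_norm.
rewrite FM // => h0.
rewrite TQ_rq //; split; first exact: rq_real.
rewrite coroot2; last by apply: rq_norm.
rewrite FL // -h0 intrM -[(q%:Z)%:~R]/Q; field; exact: hQ.
Qed.

Lemma zero_inv b : zero_root lamv b -> exists a, zero_root (- L0 n) a /\ b = Tc Q a.
Proof.
move=> [/real_rq [i [j [M [hi hj hij eb]]]]]; rewrite eb coroot2; last by apply: rq_norm.
move=> h0.
have hd : (q%:Z %| M)%Z by apply: (divM i j); rewrite -FL // h0; exists 0.
move: h0; rewrite FL //.
set m := (M %/ q)%Z.
have eM : M = m * q%:Z by rewrite divzK.
move=> h0; exists (rq n i j m%:~R); split; last by rewrite TQ_rq // -eM.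
split; first exact: rq_real.
rewrite coroot2; last by apply: rq_norm.
rewrite FM // -h0 eM intrM -[(q%:Z)%:~R]/Q; field; exact: hQ.
Qed.

End Main.

Theorem mainTheorem6 (n q : nat) :
  (3 <= n)%N -> (1 <= q)%N -> coprime q n.-1 ->
  let k : rat := - n%:R + (n%:R - 1) / q%:R in
  let lam : V n := k *: L0 n in
  let beta0 : V n := q%:R *: dlt n - theta n in
  exists sigma : Mat n -> Mat n,
    (* sigma is a group isomorphism @What n -> Wlam lam *)
    (forall w, @What n w -> Wlam lam (sigma w)) /\
    (forall w1 w2, @What n w1 -> @What n w2 -> sigma w1 = sigma w2 -> w1 = w2) /\
    (forall w', Wlam lam w' -> exists w, @What n w /\ sigma w = w') /\
    (forall w1 w2, @What n w1 -> @What n w2 -> sigma (w1 *m w2) = sigma w1 *m sigma w2) /\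
    (* mapping S onto S(k Lambda_0) *)
    (forall s, @Shat n s -> Slam lam (sigma s)) /\
    (forall s', Slam lam s' -> exists s, @Shat n s /\ sigma s = s') /\
    (* prescribed values on generators *)
    (forall i : 'I_n, val i = 0%N -> sigma (refl (alpha i)) = refl beta0) /\
    (forall i : 'I_n, (0 < val i)%N -> sigma (refl (alpha i)) = refl (alpha i)) /\
    (* sigma(W_0(-Lambda_0)) = W_0(k Lambda_0) *)
    (forall w, W0lam (- L0 n) w -> W0lam lam (sigma w)) /\
    (forall w', W0lam lam w' -> exists w, W0lam (- L0 n) w /\ sigma w = w').
Proof.
move=> hn hq hcop k lam beta0.
have hQ0 : (q%:R : rat) != 0 by rewrite pnatr_eq0; lia.
exists (sigmaq (q%:R : rat)).
have s1 : sigmaq (q%:R : rat) (1%:M : Mat n) = 1%:M by apply: sigma1.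
split.
  move=> w; rewrite /What => Ww; elim: Ww => [|g x [t ->] _ IH]; first by rewrite s1; exact: gen1.
  rewrite sigmaM // sigma_refl //; apply: genM => //.
  by exists (Tc q%:R (alpha t)); split => //; case: (S1 q hn hq hcop t).
split.
  by move=> w1 w2 _ _; apply: sigma_inj.
split.
  move=> w'; rewrite /Wlam => Ww; elim: Ww => [|g x [b [ib ->]] _ [w [Ww <-]]].
    by exists 1%:M; split => //; exact: gen1.
  have [i [j [m [hi hj hij eb]]]] := int_inv q hn hq hcop b ib.
  exists (refl (rq n i j m%:~R) *m w); split.
    by apply: gen_mul => //; apply: Qall.
  by rewrite sigmaM // sigma_refl // eb.
split.
  by move=> w1 w2 _ _; apply: sigmaM.
split.
  move=> s0 [t ->]; rewrite sigma_refl //.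
  by exists (Tc q%:R (alpha t)); split => //; apply: S1.
split.
  move=> s' [b [hb ->]]; have [t et] := S2 q hn hq hcop b hb.
  by exists (refl (alpha t)); split; [exists t | rewrite sigma_refl // et].
split.
  move=> i hi; rewrite sigma_refl //; congr refl.
  rewrite /alpha hi eqxx TcB Tc_dlt /theta TcB (Tc_eps _ 0%N); last by lia.
  by rewrite (Tc_eps _ n.-1) //; lia.
split.
  move=> i hi; rewrite sigma_refl //; congr refl.
  have hin := ltn_ord i; rewrite alphaSE // Tc_rq ?mul0r //= ; lia.
split.
  move=> w; rewrite /W0lam => Ww; elim: Ww => [|g x [a [za ->]] _ IH]; first by rewrite s1; exact: gen1.
  rewrite sigmaM // sigma_refl //; apply: genM => //.
  by exists (Tc q%:R a); split => //; apply: zero_T.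
move=> w'; rewrite /W0lam => Ww; elim: Ww => [|g x [b [zb ->]] _ [w [Ww <-]]].
  by exists 1%:M; split => //; exact: gen1.
have [a [za eb]] := zero_inv q hn hq hcop b zb.
exists (refl a *m w); split.
  by apply: genM => //; exists a.
by rewrite sigmaM // sigma_refl // eb.
Qed.
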